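(* Let $M_0<M$ be finite numbers, let $Q^0\subseteq\mathbb{R}^{m+1}$ be a rational polyhedron of height $M$ in the $(x,z)$-space ($x\in\mathbb{R}^m$, $z\in\mathbb{R}$), and let $Q_x\subseteq\mathbb{R}^m$ be a rational polytope of dimension at least one whose relative interior contains $\{x : \exists z>M_0 \text{ with } (x,z)\in Q^0\}$. Then $Q^0\subseteq R(Q_x,M,M_0)$.
   Context: For a polyhedron $H\subseteq\mathbb{R}^m\times\mathbb{R}$ and $\bar x\in\mathbb{R}^m$, the height of $\bar x$ with respect to $H$ is $\max\{\bar z:(\bar x,\bar z)\in H\}$ (it is $+\infty$ if unbounded and $-\infty$ if the set is empty); the height of $H$ is the supremum of the heights of all $\bar x\in\mathbb{R}^m$. For a rational polytope $Q_x\subseteq\mathbb{R}^m$ of dimension at least 1 and finite $M_0<M$, $R(Q_x,M,M_0)$ is the set of all $(\bar x,\bar z)\in\mathbb{R}^m\times\mathbb{R}$ with $\bar x$ in the affine hull of $Q_x$ and $\bar z\le M$ if $\bar x\in\mathrm{relint}(Q_x)$, and $\bar z\le M_0-\frac{d(\bar x,Q_x)}{\mathrm{diam}(Q_x)}(M-M_0)$ otherwise, where $d$ is Euclidean distance and $\mathrm{diam}$ the maximum distance between two points of $Q_x$. *)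

(* Defs.v *)
From HB Require Import structures.
From mathcomp Require Import all_boot all_order all_algebra.
From mathcomp Require Import all_classical all_reals.
From mathcomp Require Import ereal.
Set Implicit Arguments. Unset Strict Implicit. Unset Printing Implicit Defensive.
Import Order.TTheory GRing.Theory Num.Theory.
Local Open Scope classical_set_scope.
Local Open Scope ring_scope.

Section Defs.
Variable R : realType.

Definition edist (m : nat) (x y : 'rV[R]_m) : R :=
  Num.sqrt (\sum_(j < m) (x 0 j - y 0 j) ^+ 2).

Definition rat_polyhedron_xz (m : nat) (H : set ('rV[R]_m * R)) : Prop :=
  exists (k : nat) (A : 'M[rat]_(k, m)) (b c : 'I_k -> rat),
    H = [set p : 'rV[R]_m * R | forall i : 'I_k,
           \sum_(j < m) (ratr (A i j) : R) * p.1 0 j + ratr (b i) * p.2 <= ratr (c i)].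

Definition rat_polytope (m : nat) (Q : set 'rV[R]_m) : Prop :=
  exists (k : nat) (P : 'I_k -> 'rV[rat]_m),
    Q = [set x | exists l : 'I_k -> R, (forall i, 0 <= l i) /\
           \sum_(i < k) l i = 1 /\ x = \sum_(i < k) l i *: map_mx ratr (P i)].

Definition aff_hull (m : nat) (Q : set 'rV[R]_m) : set 'rV[R]_m :=
  [set x | exists (k : nat) (p : 'I_k -> 'rV[R]_m) (l : 'I_k -> R),
     (forall i, Q (p i)) /\ \sum_(i < k) l i = 1 /\ x = \sum_(i < k) l i *: p i].

(* dimension at least one: the affine hull is not a single point (nor empty),
   i.e. Q contains two affinely independent (= distinct) points *)
Definition dim_ge1 (m : nat) (Q : set 'rV[R]_m) : Prop :=
  exists x y, Q x /\ Q y /\ x <> y.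

Definition relint (m : nat) (Q : set 'rV[R]_m) : set 'rV[R]_m :=
  [set x | Q x /\ exists e : R, 0 < e /\
     forall y, aff_hull Q y -> edist x y < e -> Q y].

Definition dist_set (m : nat) (x : 'rV[R]_m) (Q : set 'rV[R]_m) : R :=
  inf [set edist x y | y in Q].
Definition diam (m : nat) (Q : set 'rV[R]_m) : R :=
  sup [set edist (p.1) (p.2) | p in [set p | Q p.1 /\ Q p.2]].

(* height of xbar w.r.t. H (max = sup, -oo if empty, +oo if unbounded) *)
Definition height_at (m : nat) (H : set ('rV[R]_m * R)) (x : 'rV[R]_m) : \bar R :=
  ereal_sup [set (z%:E) | z in [set z | H (x, z)]].
Definition height (m : nat) (H : set ('rV[R]_m * R)) : \bar R :=
  ereal_sup [set height_at H x | x in [set: 'rV[R]_m]].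

Definition Rset (m : nat) (Qx : set 'rV[R]_m) (M M0 : R) : set ('rV[R]_m * R) :=
  [set p | aff_hull Qx p.1 /\
     (relint Qx p.1 -> p.2 <= M) /\
     (~ relint Qx p.1 -> p.2 <= M0 - dist_set p.1 Qx / diam Qx * (M - M0))].

End Defs.

(* Main.v *)
Require Import Defs.
From HB Require Import structures.
From mathcomp Require Import all_boot all_order all_algebra.
From mathcomp Require Import all_classical all_reals.
From mathcomp Require Import ereal.
From mathcomp Require Import ring lra.
Import Order.TTheory GRing.Theory Num.Theory.
Local Open Scope classical_set_scope.
Local Open Scope ring_scope.

Section Aux.
Context {R : realType} {m : nat}.
Implicit Types (x y : 'rV[R]_m).

Lemma conv_Q0 (Q0 : set ('rV[R]_m * R)) : rat_polyhedron_xz Q0 ->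
  forall x z x1 z1 (t : R), 0 <= t -> t <= 1 -> Q0 (x,z) -> Q0 (x1,z1) ->
  Q0 ((1-t)*:x + t*:x1, (1-t)*z + t*z1).
Proof.
case=> k [A [b [c ->]]] x z x1 z1 t t0 t1 /= H1 H2 i.
have h1 := H1 i; have h2 := H2 i; move: h1 h2 => /= h1 h2.
under eq_bigr => j _ do rewrite !mxE.
rewrite (eq_bigr (fun j => (1-t) * ((ratr (A i j) : R) * x 0 j) + t * ((ratr (A i j) : R) * x1 0 j))); last by move=> j _; ring.
rewrite big_split /= -!mulr_sumr.
set S0 := \sum_(j < m) _ in h1 *.
set S1 := \sum_(j < m) _ in h2 *.
nra.
Qed.

Lemma edist_scale x y (a b : 'rV[R]_m) (c : R) :
  (forall j, x 0 j - y 0 j = c * (a 0 j - b 0 j)) -> edist x y = `|c| * edist a b.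
Proof.
move=> H; rewrite /edist.
rewrite (eq_bigr (fun j => c ^+ 2 * (a 0 j - b 0 j) ^+ 2)); last by move=> j _; rewrite H exprMn.
by rewrite -mulr_sumr sqrtrM ?sqr_ge0 // sqrtr_sqr.
Qed.

Lemma edist_ge0 x y : 0 <= edist x y.
Proof. exact: sqrtr_ge0. Qed.

Lemma helper (a b c K : R) : 0 < c -> 0 <= K ->
  (forall e, 0 < e -> e < c -> a <= b + K * e) -> a <= b.
Proof.
move=> c0 K0 H; rewrite leNgt; apply/negP => ab.
pose e := Num.min (c/2) ((a-b)/(2*(K+1))).
have e0 : 0 < e by rewrite lt_min; apply/andP; split; [lra| apply: divr_gt0; lra].
have ec : e < c.
  have : e <= c/2 by rewrite /e ge_min lexx.
  lra.
have := H e e0 ec.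
have : e <= (a-b)/(2*(K+1)) by rewrite /e ge_min lexx orbT.
rewrite ler_pdivlMr; last lra.
nra.
Qed.


Lemma hub (Q0 : set ('rV[R]_m * R)) (M : R) x z :
  height Q0 = M%:E -> Q0 (x, z) -> z <= M.
Proof.
move=> hH hQ.
have h1 : (z%:E <= height_at Q0 x)%E by apply: ereal_sup_ubound; exists z.
have h2 : (height_at Q0 x <= height Q0)%E by apply: ereal_sup_ubound; exists x.
by rewrite -lee_fin -hH (le_trans h1 h2).
Qed.

Lemma hgt (Q0 : set ('rV[R]_m * R)) (M y : R) :
  height Q0 = M%:E -> y < M -> exists x1 z1, Q0 (x1, z1) /\ y < z1.
Proof.
move=> hH hy.
have : (y%:E < height Q0)%E by rewrite hH lte_fin.
move/ereal_sup_gt => [_ [x1 _ <-]] h.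
move/ereal_sup_gt: h => [_ [z1 Hz <-]]; rewrite lte_fin => h.
by exists x1, z1.
Qed.

Lemma mid (Q0 : set ('rV[R]_m * R)) (Qx : set 'rV[R]_m) (M0 : R) :
  rat_polyhedron_xz Q0 ->
  [set x | exists z, M0 < z /\ Q0 (x, z)] `<=` relint Qx ->
  forall x z x1 z1 e, Q0 (x, z) -> z <= M0 -> Q0 (x1, z1) -> M0 < z1 ->
  0 < e -> e < z1 - M0 ->
  exists t, [/\ 0 < t, t < 1, t * (z1 - z) = M0 - z + e &
     relint Qx ((1-t)*:x + t*:x1)].
Proof.
move=> hp hsub x z x1 z1 e hQ hz hQ1 hz1 e0 ec.
have dz : 0 < z1 - z by lra.
exists ((M0 - z + e) / (z1 - z)).
have ht : (M0 - z + e) / (z1 - z) * (z1 - z) = M0 - z + e.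
  by rewrite mulrVK // unitfE gt_eqF.
have t0 : 0 < (M0 - z + e) / (z1 - z) by apply: divr_gt0; lra.
have t1 : (M0 - z + e) / (z1 - z) < 1 by rewrite ltr_pdivrMr // mul1r; lra.
split => //.
apply: hsub; exists ((1 - (M0 - z + e) / (z1 - z)) * z + (M0 - z + e) / (z1 - z) * z1).
split; last by apply: conv_Q0 => //; lra.
set t := (M0 - z + e) / (z1 - z) in ht *.
have -> : (1 - t) * z + t * z1 = z + t * (z1 - z) by ring.
rewrite ht; lra.
Qed.

End Aux.

Theorem lemma2 (R : realType) (m : nat) (M0 M : R)
  (Q0 : set ('rV[R]_m * R)) (Qx : set 'rV[R]_m) :
  M0 < M ->
  rat_polyhedron_xz Q0 ->
  height Q0 = M%:E ->
  rat_polytope Qx ->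
  dim_ge1 Qx ->
  [set x | exists z, M0 < z /\ Q0 (x, z)] `<=` relint Qx ->
  Q0 `<=` Rset Qx M M0.
Proof.
move=> hM hp hH _ _ hsub [x z] hQ; rewrite /Rset /=.
have [x1 [z1 [hQ1 hz1]]] := hgt _ _ _ hH hM.
have Qx1 : Qx x1 by have [] := hsub x1 (ex_intro _ z1 (conj hz1 hQ1)).
split; [|split].
- case: (lerP z M0) => hz; last first.
    have [Qxx _] := hsub x (ex_intro _ z (conj hz hQ)).
    exists 1%N, (fun _ => x), (fun _ => 1); split; first by [].
    by split; rewrite big_ord1 ?scale1r.
  have e0 : 0 < (z1 - M0) / 2 by lra.
  have ec : (z1 - M0) / 2 < z1 - M0 by lra.
  have [t [t0 t1 _ [Qxt _]]] := mid _ _ _ hp hsub _ _ _ _ _ hQ hz hQ1 hz1 e0 ec.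
  set xt := (1 - t) *: x + t *: x1 in Qxt.
  exists 2%N, (fun i : 'I_2 => if val i == 0%N then xt else x1),
    (fun i : 'I_2 => if val i == 0%N then 1/(1-t) else - t/(1-t)).
  have t1' : 1 - t != 0 by rewrite subr_eq0 eq_sym lt_eqF.
  split; first by move=> i; case: ifP.
  rewrite !big_ord_recr big_ord0 /=; split; first by field.
  apply/rowP => j; rewrite big_ord0 /xt !mxE; field; exact: t1'.
- by move=> _; apply: (hub _ _ _ _ hH hQ).
move=> nrel.
have hz : z <= M0.
  by rewrite leNgt; apply/negP => hz; apply: nrel; apply: hsub; exists z.
set d := dist_set x Qx.
set D := diam Qx.
have d0 : 0 <= d.
  apply: lb_le_inf; first by exists (edist x x1), x1.
  by move=> _ [y _ <-]; apply: edist_ge0.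
have dle : forall y, Qx y -> d <= edist x y.
  move=> y Qy; apply: ge_inf; last by exists y.
  by exists 0 => _ [w _ <-]; apply: edist_ge0.
case: (pselect (has_ubound [set edist (p.1) (p.2) | p in [set p | Qx p.1 /\ Qx p.2]])) => hub'; last first.
  rewrite /D /diam sup_out; last by move=> [_ ?].
  by rewrite invr0 mulr0 mul0r subr0.
have Dle : forall a b, Qx a -> Qx b -> edist a b <= D.
  by move=> a b Qa Qb; apply: ub_le_sup => //; exists (a, b).
have D0 : 0 <= D by apply: le_trans (Dle x1 x1 Qx1 Qx1); apply: edist_ge0.
case: (eqVneq D 0) => [->|Dn0]; first by rewrite invr0 mulr0 mul0r subr0.
have Dp : 0 < D by rewrite lt_def Dn0 D0.
have K : forall x2 z2, Q0 (x2, z2) -> M0 < z2 -> d * (z2 - M0) <= D * (M0 - z).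
  move=> x2 z2 hQ2 hz2.
  apply: ((@helper _ _ _ (z2 - M0) (edist x x2))); [lra | exact: edist_ge0 |].
  move=> e e0 ec.
  have [t [t0 t1 ht [Qxt _]]] := mid _ _ _ hp hsub _ _ _ _ _ hQ hz hQ2 hz2 e0 ec.
  have Qx2 : Qx x2 by have [] := hsub x2 (ex_intro _ z2 (conj hz2 hQ2)).
  have e1 : edist x ((1 - t) *: x + t *: x2) = t * edist x x2.
    rewrite (@edist_scale R m x _ x x2 t); first by rewrite ger0_norm //; lra.
    by move=> j; rewrite !mxE; ring.
  have e2 : edist x2 ((1 - t) *: x + t *: x2) = (1 - t) * edist x x2.
    rewrite (@edist_scale R m x2 _ x x2 (t - 1)); first by rewrite ler0_norm; [ring | lra].
    by move=> j; rewrite !mxE; ring.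
  have h1 := dle _ Qxt; rewrite e1 in h1.
  have h2 := Dle _ _ Qx2 Qxt; rewrite e2 in h2.
  set E := edist x x2 in h1 h2 *.
  have a1 : d * (z2 - M0) <= t * E * (z2 - M0) by apply: ler_wpM2r; lra.
  have a2 : (1 - t) * E * (M0 - z) <= D * (M0 - z) by apply: ler_wpM2r; lra.
  have a3 : t * E * (z2 - M0) = (1 - t) * E * (M0 - z) + E * e.
    have -> : t * E * (z2 - M0) = E * (t * (z2 - z)) - t * E * (M0 - z) by ring.
    rewrite ht; ring.
  lra.
have key : d * (M - M0) <= D * (M0 - z).
  apply: ((@helper _ _ _ 1 d)) => // e e0 _.
  have hmx : Num.max M0 (M - e) < M by rewrite gt_max hM /=; lra.
  have [x2 [z2 [hQ2 hz2]]] := hgt _ _ (Num.max M0 (M - e)) hH hmx.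
  move: hz2; rewrite gt_max => /andP [hz2 hz2'].
  have := K x2 z2 hQ2 hz2.
  have hz2M := hub _ _ _ _ hH hQ2.
  have : d * (M - z2) <= d * e by apply: ler_wpM2l => //; lra.
  nra.
rewrite mulrAC -mulrA.
have : d * (M - M0) / D <= M0 - z by rewrite ler_pdivrMr // [X in _ <= X]mulrC.
rewrite mulrA; lra.
Qed.
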